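(* Let $\omega=(\alpha^+,\alpha^-,\gamma_1,\gamma_2)\in\Omega$. Then the principal value product representation $$\mathsf{E}_\omega(z)=\lim_{R\to\infty}\prod_{i:\,\alpha_i^+>R^{-2}}(1-\alpha_i^+z)\prod_{i:\,\alpha_i^->R^{-2}}(1+\alpha_i^-z)$$ holds if and only if $$\gamma_1=\lim_{R\to\infty}\left(\sum_{i:\,\alpha_i^+>R^{-2}}\alpha_i^+-\sum_{i:\,\alpha_i^->R^{-2}}\alpha_i^-\right)\quad\text{and}\quad\gamma_2=0.$$
   Context: $\Omega$ is the set of $\omega=(\alpha^+,\alpha^-,\gamma_1,\gamma_2)$ with $\alpha^\pm=(\alpha_1^\pm\ge\alpha_2^\pm\ge\dots\ge0)$ non-increasing sequences of non-negative reals, $\sum_i(\alpha_i^+)^2+\sum_i(\alpha_i^-)^2<\infty$, $\gamma_1\in\mathbb{R}$, $\gamma_2\ge0$. For $\omega\in\Omega$, $\mathsf{E}_\omega(z)=e^{-\gamma_1 z-\frac{\gamma_2}{2}z^2}\prod_{i}e^{z\alpha_i^+}(1-z\alpha_i^+)\prod_{i}e^{-z\alpha_i^-}(1+z\alpha_i^-)$. *)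

(* Defs.v *)
From Stdlib Require Import Reals.
From Coquelicot Require Import Coquelicot.
Open Scope R_scope.

(* Membership in Omega: alpha^+ = ap, alpha^- = am (indexed from 0),
   gamma_1 = g1, gamma_2 = g2. *)
Definition in_Omega (ap am : nat -> R) (g1 g2 : R) : Prop :=
  (forall i, 0 <= ap i) /\ (forall i, ap (S i) <= ap i) /\
  (forall i, 0 <= am i) /\ (forall i, am (S i) <= am i) /\
  ex_series (fun i => ap i ^ 2 + am i ^ 2) /\
  0 <= g2.

Definition Cexp (z : C) : C :=
  (exp (Re z) * cos (Im z), exp (Re z) * sin (Im z)).

Fixpoint cprod (f : nat -> C) (n : nat) : C :=
  match n with
  | O => 1%C
  | S m => Cmult (cprod f m) (f m)
  end.

Definition limC (u : nat -> C) : C :=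
  @lim C_CompleteNormedModule (filtermap u eventually).

Definition cinfprod (f : nat -> C) : C := limC (cprod f).

(* E_omega(z) = e^{-g1 z - g2 z^2 / 2}
     * prod_i e^{z ap_i} (1 - z ap_i) * prod_i e^{-z am_i} (1 + z am_i). *)
Definition Eomega (ap am : nat -> R) (g1 g2 : R) (z : C) : C :=
  Cmult (Cmult
    (Cexp (Cminus (Copp (Cmult (RtoC g1) z))
                  (Cmult (RtoC (g2 / 2)) (Cmult z z))))
    (cinfprod (fun i => Cmult (Cexp (Cmult z (RtoC (ap i))))
                              (Cminus 1 (Cmult z (RtoC (ap i)))))))
    (cinfprod (fun i => Cmult (Cexp (Copp (Cmult z (RtoC (am i)))))
                              (Cplus 1 (Cmult z (RtoC (am i)))))).

(* Finite product over {i : a i > t} of f i (finitely many such i when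
   a -> 0), written as the (eventually constant) limit of partial products. *)
Definition trunc_prod (a : nat -> R) (t : R) (f : nat -> C) : C :=
  cinfprod (fun i => if Rlt_dec t (a i) then f i else 1%C).

Definition trunc_sum (a : nat -> R) (t : R) : R :=
  Series (fun i => if Rlt_dec t (a i) then a i else 0).

Definition PVprod (ap am : nat -> R) (t : R) (z : C) : C :=
  Cmult (trunc_prod ap t (fun i => Cminus 1 (Cmult (RtoC (ap i)) z)))
        (trunc_prod am t (fun i => Cplus 1 (Cmult (RtoC (am i)) z))).

(* Main.v *)
Require Import Defs.
From Stdlib Require Import Reals Lra Psatz Arith Lia ClassicalEpsilon.
From Coquelicot Require Import Coquelicot.
Open Scope R_scope.

Lemma sin_lb_eq a : sin_lb a = a - a^3/6 + a^5/120 - a^7/5040.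
Proof.
  unfold sin_lb, sin_approx, sin_term. simpl sum_f_R0.
  field.
Qed.

Lemma sin_abs_le y : Rabs y <= 1/2 -> Rabs (sin y) <= Rabs y.
Proof.
  intros H. pose proof PI2_1.
  destruct (Rle_or_lt 0 y) as [Hy|Hy].
  - destruct (Req_dec y 0) as [->|Hn]. rewrite sin_0, Rabs_R0; lra.
    assert (0 <= sin y) by (apply sin_ge_0; unfold Rabs in H; destruct Rcase_abs in H; lra).
    pose proof (sin_lt_x y ltac:(lra)).
    rewrite !Rabs_right; lra.
  - assert (0 <= sin (-y)) by (apply sin_ge_0; unfold Rabs in H; destruct Rcase_abs in H; lra).
    pose proof (sin_lt_x (-y) ltac:(lra)). rewrite sin_neg in *.
    rewrite !Rabs_left1; lra.
Qed.

Lemma sin_sub_bound y : Rabs y <= 1/2 -> Rabs (sin y - y) <= y^2.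
Proof.
  intros H. pose proof PI2_1.
  assert (K: forall u, 0 < u <= 1/2 -> Rabs (sin u - u) <= u^2).
  { intros u Hu. pose proof (SIN u ltac:(lra) ltac:(lra)) as [S _].
    rewrite sin_lb_eq in S. pose proof (sin_lt_x u ltac:(lra)).
    rewrite Rabs_left1 by lra.
    assert (u^3/6 <= u^2). { assert (u^3 = u^2*u) by ring. assert (0 <= u^2) by nra. nra. }
    assert (u^7/5040 <= u^5/120).
    { assert (E7: u^7 = u^5 * (u*u)) by ring. assert (0 <= u^5) by (apply pow_le; lra).
      assert (u^5 * (u*u) <= u^5 * 1) by (apply Rmult_le_compat_l; nra). rewrite E7. lra. }
    lra. }
  destruct (Rtotal_order y 0) as [Hy|[Hy|Hy]].
  - replace (sin y - y) with (- (sin (-y) - (-y))) by (rewrite sin_neg; ring).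
    rewrite Rabs_Ropp. replace (y^2) with ((-y)^2) by ring. apply K.
    unfold Rabs in H; destruct Rcase_abs in H; lra.
  - subst. rewrite sin_0. replace (0-0) with 0 by ring. rewrite Rabs_R0. lra.
  - apply K. unfold Rabs in H; destruct Rcase_abs in H; lra.
Qed.

Lemma cos_sub_bound y : Rabs y <= 1/2 -> Rabs (cos y - 1) <= y^2/2.
Proof.
  intros H. replace y with (2 * (y/2)) at 1 by field. rewrite cos_2a_sin.
  assert (Rabs (sin (y/2)) <= Rabs (y/2)) by (apply sin_abs_le; apply Rabs_le; apply Rabs_le_between in H; lra).
  replace (1 - 2 * sin (y / 2) * sin (y / 2) - 1) with (- (2 * (sin (y/2))^2)) by ring.
  rewrite Rabs_Ropp, Rabs_right by nra.
  assert ((sin (y/2))^2 <= (y/2)^2).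
  { rewrite <- (pow2_abs (sin _)), <- (pow2_abs (y/2)). apply pow_incr; split; [apply Rabs_pos|auto]. }
  lra.
Qed.

Lemma exp_sub_bound x : Rabs x <= 1/2 -> Rabs (exp x - 1 - x) <= 2 * x^2.
Proof.
  intros H. assert (Hx: -1/2 <= x <= 1/2) by (unfold Rabs in H; destruct Rcase_abs in H; lra).
  pose proof (exp_ineq1_le x). pose proof (exp_ineq1_le (-x)).
  assert (E: exp x * exp (-x) = 1) by (rewrite <- exp_plus; replace (x + -x) with 0 by ring; apply exp_0).
  assert (exp x * (1 - x) <= 1).
  { rewrite <- E. apply Rmult_le_compat_l. left; apply exp_pos. lra. }
  assert (exp x <= 1 + x + 2*x^2).
  { assert (0 <= x^2 * (1 - 2*x)) by nra. nra. }
  rewrite Rabs_right; lra.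
Qed.

Lemma exp_le_mono a b : a <= b -> exp a <= exp b.
Proof. intros [H|H]. left; apply exp_increasing; auto. subst; lra. Qed.

Lemma Cmod_le_sum (c : C) : Cmod c <= Rabs (Re c) + Rabs (Im c).
Proof.
  pose proof (Cmod2_alt c). pose proof (Cmod_ge_0 c).
  pose proof (Rabs_pos (Re c)). pose proof (Rabs_pos (Im c)).
  rewrite <- (pow2_abs (Re c)), <- (pow2_abs (Im c)) in H. nra.
Qed.

Lemma Cexp_add (a b : C) : Cexp (Cplus a b) = Cmult (Cexp a) (Cexp b).
Proof.
  destruct a as [a1 a2], b as [b1 b2]. unfold Cexp, Cmult, Cplus; simpl.
  rewrite exp_plus, cos_plus, sin_plus. f_equal; ring.
Qed.

Lemma Cexp_0 : Cexp (RtoC 0) = RtoC 1.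
Proof. unfold Cexp, RtoC; simpl. rewrite exp_0, cos_0, sin_0. f_equal; ring. Qed.

Lemma Cexp_opp (a : C) : Cmult (Cexp a) (Cexp (Copp a)) = RtoC 1.
Proof. rewrite <- Cexp_add. replace (Cplus a (Copp a)) with (RtoC 0) by ring. apply Cexp_0. Qed.

Lemma Cmod_Cexp (w : C) : Cmod (Cexp w) = exp (Re w).
Proof.
  destruct w as [x y]. unfold Cexp, Cmod, Re, Im; cbn [fst snd].
  replace ((exp x * cos y) ^ 2 + (exp x * sin y) ^ 2) with (exp x ^ 2)
    by (transitivity (exp x ^ 2 * (Rsqr (sin y) + Rsqr (cos y))); [rewrite sin2_cos2; ring | unfold Rsqr; ring]).
  apply sqrt_pow2. left; apply exp_pos.
Qed.

Lemma Cmod_Cminus_le (a b : C) : Cmod (Cminus a b) <= Cmod a + Cmod b.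
Proof. unfold Cminus. rewrite <- (Cmod_opp b). apply Cmod_triangle. Qed.

Lemma Cexp_B1 (w : C) : Cmod w <= 1/2 ->
  Cmod (Cminus (Cminus (Cexp w) (RtoC 1)) w) <= 3 * Cmod w ^ 2.
Proof.
  intros Hw. destruct w as [x y].
  pose proof (re_le_Cmod (x,y)) as Hx. pose proof (Cmod2_alt (x,y)) as Hm.
  unfold Re, Im in Hx, Hm; cbn [fst snd] in Hx, Hm.
  assert (Hy : Rabs y <= Cmod (x,y)).
  { pose proof (Cmod_ge_0 (x,y)). rewrite <- (pow2_abs y) in Hm.
    pose proof (Rabs_pos y). nra. }
  rewrite Hm.
  eapply Rle_trans; [apply Cmod_le_sum|]. unfold Cexp, Cminus, Cplus, Copp, RtoC; simpl.
  assert (H1 : Rabs x <= 1/2) by lra. assert (H2 : Rabs y <= 1/2) by lra.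
  pose proof (exp_sub_bound x H1) as E1.
  pose proof (cos_sub_bound y H2) as E2.
  pose proof (sin_sub_bound y H2) as E3.
  pose proof (sin_abs_le y H2) as E4.
  assert (Ex : exp x <= 2).
  { apply Rabs_le_between in E1. apply Rabs_le_between in H1. nra. }
  assert (Ex1 : Rabs (exp x - 1) <= 2 * Rabs x).
  { replace (exp x - 1) with ((exp x - 1 - x) + x) by ring.
    eapply Rle_trans; [apply Rabs_triang|]. rewrite <- (pow2_abs x) in E1.
    assert (2 * Rabs x ^2 <= Rabs x) by (pose proof (Rabs_pos x); nra). lra. }
  pose proof (exp_pos x).
  assert (R1 : Rabs (exp x * cos y + - (1) + - x) <= 2 * x^2 + y^2).
  { replace (exp x * cos y + - (1) + - x) with ((exp x - 1 - x) + exp x * (cos y - 1)) by ring.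
    eapply Rle_trans; [apply Rabs_triang|]. rewrite Rabs_mult, (Rabs_right (exp x)) by lra.
    assert (exp x * Rabs (cos y - 1) <= 2 * (y^2/2)).
    { apply Rmult_le_compat; auto; try lra. apply Rabs_pos. }
    lra. }
  assert (R2 : Rabs (exp x * sin y + - 0 + - y) <= x^2 + 2 * y^2).
  { replace (exp x * sin y + - 0 + - y) with ((exp x - 1) * sin y + (sin y - y)) by ring.
    eapply Rle_trans; [apply Rabs_triang|]. rewrite Rabs_mult.
    assert (Rabs (exp x - 1) * Rabs (sin y) <= (2 * Rabs x) * Rabs y).
    { apply Rmult_le_compat; auto; apply Rabs_pos. }
    rewrite <- (pow2_abs x), <- (pow2_abs y). rewrite <- (pow2_abs y) in E3.
    assert (2*Rabs x*Rabs y <= Rabs x^2 + Rabs y^2) by (pose proof (pow2_ge_0 (Rabs x - Rabs y)); lra).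
    lra. }
  lra.
Qed.

Definition gfun (w : C) : C := Cmult (Cexp w) (Cminus (RtoC 1) w).

Lemma gfun_B2 (w : C) : Cmod w <= 1/2 -> Cmod (Cminus (gfun w) (RtoC 1)) <= 7 * Cmod w ^ 2.
Proof.
  intros Hw. pose proof (Cexp_B1 w Hw) as B. pose proof (Cmod_ge_0 w).
  replace (Cminus (gfun w) (RtoC 1)) with
    (Cminus (Cminus (Cminus (Cexp w) (RtoC 1)) w) (Cmult w (Cminus (Cexp w) (RtoC 1))))
    by (unfold gfun; ring).
  eapply Rle_trans; [apply Cmod_Cminus_le|]. rewrite Cmod_mult.
  assert (Cmod (Cminus (Cexp w) (RtoC 1)) <= 3 * Cmod w ^ 2 + Cmod w).
  { replace (Cminus (Cexp w) (RtoC 1)) with (Cplus (Cminus (Cminus (Cexp w) (RtoC 1)) w) w) by ring.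
    eapply Rle_trans; [apply Cmod_triangle|]. lra. }
  assert (Cmod w * Cmod (Cminus (Cexp w) (RtoC 1)) <= Cmod w * (3 * Cmod w ^ 2 + Cmod w))
    by (apply Rmult_le_compat_l; auto).
  nra.
Qed.

Definition Kr (r : R) := 7 + 4 * (exp r * (1 + r) + 1).

Lemma gfun_B3 (w : C) (r : R) : Cmod w <= r ->
  Cmod (Cminus (gfun w) (RtoC 1)) <= Kr r * Cmod w ^ 2.
Proof.
  intros Hr. pose proof (Cmod_ge_0 w). pose proof (exp_pos r). unfold Kr.
  destruct (Rle_or_lt (Cmod w) (1/2)) as [Hs|Hs].
  - pose proof (gfun_B2 w Hs). assert (0 <= exp r * (1 + r) + 1) by nra. nra.
  - eapply Rle_trans; [apply Cmod_Cminus_le|]. rewrite Cmod_1. unfold gfun.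
    rewrite Cmod_mult, Cmod_Cexp.
    assert (exp (Re w) <= exp r).
    { apply exp_le_mono. pose proof (re_le_Cmod w). apply Rabs_le_between in H1. lra. }
    assert (Cmod (Cminus (RtoC 1) w) <= 1 + r) by (eapply Rle_trans; [apply Cmod_Cminus_le|]; rewrite Cmod_1; lra).
    assert (exp (Re w) * Cmod (Cminus (RtoC 1) w) <= exp r * (1 + r)).
    { apply Rmult_le_compat; auto. left; apply exp_pos. apply Cmod_ge_0. }
    assert (1 <= 4 * Cmod w ^ 2) by nra.
    assert (0 <= exp r * (1 + r) + 1) by nra.
    nra.
Qed.

Fixpoint rsum (a : nat -> R) (n : nat) : R :=
  match n with O => 0 | S m => rsum a m + a m end.

Lemma flim_eps {T} {K : AbsRing} {V : NormedModule K} (F : (T -> Prop) -> Prop) {FF : Filter F}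
  (f : T -> V) (l : V) :
  filterlim f F (locally l) <-> forall eps, 0 < eps -> F (fun x => norm (minus (f x) l) < eps).
Proof.
  split.
  - intros H eps Heps.
    pose proof (@norm_factor_gt_0 K V) as Hnf.
    assert (Hp : 0 < eps / @norm_factor K V) by (apply Rdiv_lt_0_compat; auto).
    pose proof (proj1 (filterlim_locally f l) H (mkposreal _ Hp)) as H1.
    eapply filter_imp; [|exact H1]. intros x Hx. apply norm_compat2 in Hx. simpl in Hx.
    replace (@norm_factor K V * (eps / @norm_factor K V)) with eps in Hx; auto.
    field. apply Rgt_not_eq, Hnf.
  - intros H. apply filterlim_locally. intros eps.
    eapply filter_imp; [|exact (H eps (cond_pos eps))]. intros x Hx. apply norm_compat1. auto.
Qed.

Lemma flimC {T} (F : (T -> Prop) -> Prop) {FF : Filter F} (f : T -> C) (l : C) :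
  filterlim f F (locally l) <-> forall eps, 0 < eps -> F (fun x => Cmod (Cminus (f x) l) < eps).
Proof. exact (@flim_eps T C_AbsRing C_NormedModule F FF f l). Qed.

Lemma flimR {T} (F : (T -> Prop) -> Prop) {FF : Filter F} (f : T -> R) (l : R) :
  filterlim f F (locally l) <-> forall eps, 0 < eps -> F (fun x => Rabs (f x - l) < eps).
Proof. exact (@flim_eps T R_AbsRing R_NormedModule F FF f l). Qed.

Lemma limC_eq (u : nat -> C) (l : C) : filterlim u eventually (locally l) -> limC u = l.
Proof.
  intros H. unfold limC.
  assert (PF : ProperFilter (filtermap u eventually)).
  { apply filtermap_proper_filter. apply eventually_filter. }
  assert (CF : cauchy (filtermap u eventually)).
  { intros eps. exists l. apply (proj1 (filterlim_locally u l) H eps). }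
  pose proof (@complete_cauchy C_CompleteNormedModule _ PF CF) as H2.
  assert (H3 : filterlim (fun x : C => x) (filtermap u eventually)
      (locally (@lim C_CompleteNormedModule (filtermap u eventually)))).
  { apply filterlim_locally. intros eps. apply H2. }
  assert (H4 : filterlim (fun x : C => x) (filtermap u eventually) (locally l)).
  { intros P HP. apply H. auto. }
  eapply (@filterlim_locally_unique C C_AbsRing C_NormedModule); eauto.
  apply Proper_StrongProper. auto.
Qed.

Lemma ev_const {U : UniformSpace} (u : nat -> U) (c : U) (N : nat) :
  (forall n, (N <= n)%nat -> u n = c) -> filterlim u eventually (locally c).
Proof.
  intros H. apply filterlim_locally. intros eps. exists N. intros n Hn.
  rewrite H by auto. apply ball_center.
Qed.

Lemma sum_n_rsum (h : nat -> R) n : sum_n h n = rsum h (S n).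
Proof.
  induction n. rewrite sum_O. simpl. ring.
  rewrite sum_Sn, IHn. simpl. unfold plus; simpl. ring.
Qed.

Lemma rsum_ext_le (h a : nat -> R) N : (forall i, (i < N)%nat -> h i = a i) ->
  forall m, (m <= N)%nat -> rsum h m = rsum a m.
Proof.
  intros H m. induction m; intros Hm; simpl; auto.
  rewrite IHm by lia. rewrite H by lia. auto.
Qed.

Lemma rsum_const_after (h : nat -> R) N : (forall i, (N <= i)%nat -> h i = 0) ->
  forall m, (N <= m)%nat -> rsum h m = rsum h N.
Proof.
  intros H m Hm. induction Hm; auto. simpl. rewrite IHHm, H by lia. ring.
Qed.

Lemma trunc_series (h a : nat -> R) N :
  (forall i, (i < N)%nat -> h i = a i) -> (forall i, (N <= i)%nat -> h i = 0) ->
  is_series h (rsum a N).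
Proof.
  intros H1 H2. unfold is_series. apply (ev_const _ _ N). intros n Hn.
  rewrite sum_n_rsum. rewrite (rsum_const_after h N H2) by lia.
  apply (rsum_ext_le h a N H1). lia.
Qed.

Lemma rsum_le_Series (c : nat -> R) n : (forall i, 0 <= c i) -> ex_series c -> rsum c n <= Series c.
Proof.
  intros Hc Hs.
  assert (HT : is_series (fun i => if lt_dec i n then c i else 0) (rsum c n)).
  { apply trunc_series; intros i Hi; destruct (lt_dec i n); auto; lia. }
  rewrite <- (is_series_unique _ _ HT).
  apply Series_le; auto. intros k. destruct (lt_dec k n); split; auto; lra.
Qed.

Lemma rsum_nonneg (c : nat -> R) n : (forall i, 0 <= c i) -> 0 <= rsum c n.
Proof. intros H; induction n; simpl. lra. pose proof (H n). lra. Qed.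

Lemma cprod_bound (g : nat -> C) (c : nat -> R) :
  (forall i, Cmod (Cminus (g i) (RtoC 1)) <= c i) ->
  forall n, Cmod (cprod g n) <= exp (rsum c n).
Proof.
  intros H n. induction n; simpl.
  - rewrite Cmod_1, exp_0. lra.
  - rewrite Cmod_mult, exp_plus.
    assert (Cmod (g n) <= exp (c n)).
    { eapply Rle_trans; [|apply exp_ineq1_le].
      replace (g n) with (Cplus (Cminus (g n) (RtoC 1)) (RtoC 1)) by ring.
      eapply Rle_trans; [apply Cmod_triangle|]. rewrite Cmod_1. specialize (H n). lra. }
    apply Rmult_le_compat; auto; apply Cmod_ge_0.
Qed.

Lemma cprod_cv (g : nat -> C) (c : nat -> R) :
  (forall i, Cmod (Cminus (g i) (RtoC 1)) <= c i) -> ex_series c ->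
  exists P, filterlim (cprod g) eventually (locally P).
Proof.
  intros H Hs.
  assert (Hc : forall i, 0 <= c i) by (intros i; eapply Rle_trans; [apply Cmod_ge_0|apply H]).
  set (B := exp (Series c)).
  set (d := fun n => Cminus (cprod g (S n)) (cprod g n)).
  assert (Hd : forall n, norm (d n) <= scal B (c n)).
  { intros n. unfold d. simpl.
    replace (Cminus (Cmult (cprod g n) (g n)) (cprod g n)) with
      (Cmult (cprod g n) (Cminus (g n) (RtoC 1))) by ring.
    change (norm (Cmult (cprod g n) (Cminus (g n) (RtoC 1)))) with
      (Cmod (Cmult (cprod g n) (Cminus (g n) (RtoC 1)))).
    rewrite Cmod_mult. change (scal B (c n)) with (B * c n).
    apply Rmult_le_compat; try apply Cmod_ge_0; auto.
    eapply Rle_trans; [apply (cprod_bound g c H)|]. apply exp_le_mono.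
    apply rsum_le_Series; auto. }
  assert (Hex : ex_series d).
  { apply (@ex_series_le C_AbsRing C_CompleteNormedModule d (fun n => scal B (c n))); auto.
    apply (@ex_series_scal_l R_AbsRing R_NormedModule). auto. }
  destruct Hex as [l Hl].
  assert (Tel : forall n, sum_n d n = Cminus (cprod g (S n)) (RtoC 1)).
  { induction n.
    - rewrite sum_O. unfold d. simpl. ring.
    - rewrite sum_Sn, IHn. unfold d. change (plus ?a ?b) with (Cplus a b). match goal with |- ?x = ?y => change (@eq C x y) end. ring. }
  exists (Cplus (RtoC 1) l).
  apply (proj2 (flimC _ _ _)). intros eps Heps.
  unfold is_series in Hl. apply (proj1 (flimC _ _ _) Hl eps) in Heps.
  destruct Heps as [N HN]. exists (S N). intros n Hn.
  destruct n as [|m]; [lia|].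
  specialize (HN m ltac:(lia)). rewrite Tel in HN.
  replace (Cminus (cprod g (S m)) (Cplus (RtoC 1) l)) with
    (Cminus (Cminus (cprod g (S m)) (RtoC 1)) l) by ring. auto.
Qed.

Lemma dec_mono (a : nat -> R) : (forall i, a (S i) <= a i) ->
  forall i j, (i <= j)%nat -> a j <= a i.
Proof.
  intros H i j Hij. induction Hij. lra. specialize (H m). lra.
Qed.

Lemma min_pos (a : nat -> R) n : (forall i, 0 <= a i) ->
  exists t0, 0 < t0 /\ forall i, (i < n)%nat -> a i = 0 \/ t0 <= a i.
Proof.
  intros Ha. induction n.
  - exists 1. split. lra. intros; lia.
  - destruct IHn as [t0 [Ht0 Hi]].
    destruct (Req_dec (a n) 0) as [E|E].
    + exists t0. split; auto. intros i Hi'. destruct (Nat.eq_dec i n). subst; auto. apply Hi; lia.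
    + exists (Rmin t0 (a n)). split.
      * apply Rmin_pos; auto. pose proof (Ha n); lra.
      * intros i Hi'. destruct (Nat.eq_dec i n). subst; right; apply Rmin_r.
        destruct (Hi i ltac:(lia)); auto. right. eapply Rle_trans; [apply Rmin_l|]; auto.
Qed.

Lemma cnt_exists (a : nat -> R) (t : R) : (forall i, a (S i) <= a i) ->
  forall m, a m <= t -> exists N, forall i, t < a i <-> (i < N)%nat.
Proof.
  intros Hd m. induction m; intros Hm.
  - exists 0%nat. intros i. split; intros Hi; [|lia].
    pose proof (dec_mono a Hd 0 i ltac:(lia)). lra.
  - destruct (Rlt_or_le t (a m)) as [Ht|Ht].
    + exists (S m). intros i. split; intros Hi.
      * destruct (le_lt_dec (S m) i); [|lia].
        pose proof (dec_mono a Hd (S m) i l). lra.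
      * pose proof (dec_mono a Hd i m ltac:(lia)). lra.
    + apply IHm; auto.
Qed.

Definition cnt (a : nat -> R) (t : R) : nat :=
  epsilon (inhabits 0%nat) (fun N => forall i, t < a i <-> (i < N)%nat).

Lemma cnt_spec (a : nat -> R) (t : R) : (forall i, a (S i) <= a i) ->
  (exists m, a m <= t) -> forall i, t < a i <-> (i < cnt a t)%nat.
Proof.
  intros Hd [m Hm]. unfold cnt. apply epsilon_spec. apply (cnt_exists a t Hd m Hm).
Qed.

Lemma cofinal (a : nat -> R) (Q : nat -> C) (P : C) :
  (forall i, 0 <= a i) -> (forall i, a (S i) <= a i) ->
  (forall n, a n = 0 -> Q (S n) = Q n) ->
  filterlim Q eventually (locally P) ->
  forall eps, 0 < eps -> exists t0, 0 < t0 /\ forall t N, 0 < t < t0 ->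
    (forall i, t < a i <-> (i < N)%nat) -> Cmod (Cminus (Q N) P) < eps.
Proof.
  intros Ha Hd HQ HP eps Heps.
  destruct (proj1 (flimC _ _ _) HP eps Heps) as [n0 Hn0].
  destruct (min_pos a n0 Ha) as [t0 [Ht0 Hmin]].
  exists t0. split; auto. intros t N Ht HN.
  destruct (le_lt_dec n0 N) as [Hle|Hlt]; [apply Hn0; auto|].
  assert (HaN : a N = 0).
  { assert (a N <= t) by (destruct (Rle_or_lt (a N) t); auto; apply HN in H; lia).
    destruct (Hmin N Hlt); auto. lra. }
  assert (Hc : forall k, Q (k + N)%nat = Q N).
  { induction k; simpl; auto. rewrite HQ; auto.
    pose proof (dec_mono a Hd N (k + N) ltac:(lia)). pose proof (Ha (k+N)%nat). lra. }
  replace (Q N) with (Q n0). apply Hn0; lia.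
  replace n0 with ((n0 - N) + N)%nat by lia. apply Hc.
Qed.

Lemma Rr_small (t0 : R) : 0 < t0 -> forall x, 1 + / t0 < x -> 0 < / (x ^ 2) < t0.
Proof.
  intros Ht x Hx. pose proof (Rinv_0_lt_compat t0 Ht).
  assert (x ^ 2 > / t0) by nra.
  split. apply Rinv_0_lt_compat. nra.
  apply (Rlt_le_trans _ (/ / t0)). apply Rinv_lt_contravar; nra. rewrite Rinv_inv; lra.
Qed.

Lemma cofinal_lim (a : nat -> R) (Q : nat -> C) (P : C) :
  (forall i, 0 <= a i) -> (forall i, a (S i) <= a i) ->
  (forall t, 0 < t -> exists m, a m <= t) ->
  (forall n, a n = 0 -> Q (S n) = Q n) ->
  filterlim Q eventually (locally P) ->
  filterlim (fun x => Q (cnt a (/ (x ^ 2)))) (Rbar_locally p_infty) (locally P).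
Proof.
  intros Ha Hd Hz HQ HP. apply (proj2 (flimC _ _ _)). intros eps Heps.
  destruct (cofinal a Q P Ha Hd HQ HP eps Heps) as [t0 [Ht0 H]].
  exists (1 + / t0). intros x Hx. pose proof (Rr_small t0 Ht0 x Hx) as Hs.
  apply (H (/ (x ^ 2))); auto. apply cnt_spec; auto. apply Hz; lra.
Qed.

Lemma cprod_mask (f h : nat -> C) N :
  (forall i, (i < N)%nat -> h i = f i) -> (forall i, (N <= i)%nat -> h i = RtoC 1) ->
  forall n, (N <= n)%nat -> cprod h n = cprod f N.
Proof.
  intros H1 H2.
  assert (L : forall m, (m <= N)%nat -> cprod h m = cprod f m).
  { induction m; intros Hm; simpl; auto. rewrite IHm by lia. rewrite H1 by lia. auto. }
  intros n Hn. induction Hn. apply L; auto.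
  simpl. rewrite IHHn, H2 by lia. ring.
Qed.

Lemma trunc_prod_eq (a : nat -> R) t (f : nat -> C) N :
  (forall i, t < a i <-> (i < N)%nat) -> trunc_prod a t f = cprod f N.
Proof.
  intros H. unfold trunc_prod, cinfprod. apply limC_eq. apply (ev_const _ _ N).
  apply cprod_mask.
  - intros i Hi. destruct (Rlt_dec t (a i)); auto. apply H in Hi. contradiction.
  - intros i Hi. destruct (Rlt_dec t (a i)); auto. apply H in r. lia.
Qed.

Lemma trunc_sum_eq (a : nat -> R) t N :
  (forall i, t < a i <-> (i < N)%nat) -> trunc_sum a t = rsum a N.
Proof.
  intros H. unfold trunc_sum. apply is_series_unique. apply trunc_series.
  - intros i Hi. destruct (Rlt_dec t (a i)); auto. apply H in Hi. contradiction.
  - intros i Hi. destruct (Rlt_dec t (a i)); auto. apply H in r. lia.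
Qed.

Definition fp (a : nat -> R) (z : C) := fun i => Cminus 1 (Cmult (RtoC (a i)) z).
Definition fm (a : nat -> R) (z : C) := fun i => Cplus 1 (Cmult (RtoC (a i)) z).
Definition gp (a : nat -> R) (z : C) := fun i =>
  Cmult (Cexp (Cmult z (RtoC (a i)))) (Cminus 1 (Cmult z (RtoC (a i)))).
Definition gm (a : nat -> R) (z : C) := fun i =>
  Cmult (Cexp (Copp (Cmult z (RtoC (a i))))) (Cplus 1 (Cmult z (RtoC (a i)))).

Lemma gp_id z a N : cprod (gp a z) N = Cmult (cprod (fp a z) N) (Cexp (Cmult z (RtoC (rsum a N)))).
Proof.
  induction N; simpl.
  - replace (Cmult z (RtoC 0)) with (RtoC 0) by ring. rewrite Cexp_0. ring.
  - rewrite IHN. rewrite RtoC_plus.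
    replace (Cmult z (Cplus (RtoC (rsum a N)) (RtoC (a N)))) with
      (Cplus (Cmult z (RtoC (rsum a N))) (Cmult z (RtoC (a N)))) by ring.
    rewrite Cexp_add. unfold gp, fp. ring.
Qed.

Lemma gm_id z a N : cprod (gm a z) N = Cmult (cprod (fm a z) N) (Cexp (Copp (Cmult z (RtoC (rsum a N))))).
Proof.
  induction N; simpl.
  - replace (Copp (Cmult z (RtoC 0))) with (RtoC 0) by ring. rewrite Cexp_0. ring.
  - rewrite IHN. rewrite RtoC_plus.
    replace (Copp (Cmult z (Cplus (RtoC (rsum a N)) (RtoC (a N))))) with
      (Cplus (Copp (Cmult z (RtoC (rsum a N)))) (Copp (Cmult z (RtoC (a N))))) by ring.
    rewrite Cexp_add. unfold gm, fm. ring.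
Qed.

Lemma gp_gfun a z i : gp a z i = gfun (Cmult z (RtoC (a i))).
Proof. reflexivity. Qed.

Lemma gm_gfun a z i : gm a z i = gfun (Copp (Cmult z (RtoC (a i)))).
Proof. unfold gm, gfun. f_equal. ring. Qed.

Lemma gfun_0 : gfun (RtoC 0) = RtoC 1.
Proof. unfold gfun. rewrite Cexp_0. ring. Qed.

Lemma Cmod_zR (z : C) (r : R) : 0 <= r -> Cmod (Cmult z (RtoC r)) = Cmod z * r.
Proof. intros H. rewrite Cmod_mult, Cmod_R, Rabs_right; lra. Qed.

Lemma sq_series (ap am : nat -> R) : ex_series (fun i => ap i ^ 2 + am i ^ 2) ->
  ex_series (fun i => ap i ^ 2) /\ ex_series (fun i => am i ^ 2).
Proof.
  intros H. split; (eapply (@ex_series_le R_AbsRing R_CompleteNormedModule); [|exact H]);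
  intros n; change (norm ?x) with (Rabs x); cbv beta; rewrite Rabs_right;
  try (pose proof (pow2_ge_0 (ap n)); pose proof (pow2_ge_0 (am n)); lra).
Qed.

Lemma gen_cv (a : nat -> R) (z : C) (g : nat -> C) :
  (forall i, 0 <= a i) -> (forall i, a (S i) <= a i) -> ex_series (fun i => a i ^ 2) ->
  (forall i, Cmod (Cminus (g i) (RtoC 1)) <= Kr (Cmod z * a 0%nat) * (Cmod z * a i) ^ 2) ->
  exists P, filterlim (cprod g) eventually (locally P).
Proof.
  intros Ha Hd Hs H. apply (cprod_cv g _ H).
  apply (ex_series_ext (fun i => scal (Kr (Cmod z * a 0%nat) * Cmod z ^ 2) (a i ^ 2))).
  - intros n. change (scal ?x ?y) with (x * y). match goal with |- ?x = ?y => change (@eq R x y) end. ring.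
  - apply (@ex_series_scal_l R_AbsRing R_NormedModule). auto.
Qed.

Lemma gp_bound (a : nat -> R) z i : (forall i, 0 <= a i) -> (forall i, a (S i) <= a i) ->
  Cmod (Cminus (gp a z i) (RtoC 1)) <= Kr (Cmod z * a 0%nat) * (Cmod z * a i) ^ 2.
Proof.
  intros Ha Hd. rewrite gp_gfun.
  assert (Hle : Cmod (Cmult z (RtoC (a i))) <= Cmod z * a 0%nat).
  { rewrite Cmod_zR by auto. apply Rmult_le_compat_l. apply Cmod_ge_0.
    apply (dec_mono a Hd 0 i). lia. }
  pose proof (gfun_B3 _ _ Hle) as HB. rewrite Cmod_zR in HB by auto. exact HB.
Qed.

Lemma gm_bound (a : nat -> R) z i : (forall i, 0 <= a i) -> (forall i, a (S i) <= a i) ->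
  Cmod (Cminus (gm a z i) (RtoC 1)) <= Kr (Cmod z * a 0%nat) * (Cmod z * a i) ^ 2.
Proof.
  intros Ha Hd. rewrite gm_gfun.
  assert (Hle : Cmod (Copp (Cmult z (RtoC (a i)))) <= Cmod z * a 0%nat).
  { rewrite Cmod_opp, Cmod_zR by auto. apply Rmult_le_compat_l. apply Cmod_ge_0.
    apply (dec_mono a Hd 0 i). lia. }
  pose proof (gfun_B3 _ _ Hle) as HB. rewrite Cmod_opp, Cmod_zR in HB by auto. exact HB.
Qed.

Lemma gp_zero a z n : a n = 0 -> cprod (gp a z) (S n) = cprod (gp a z) n.
Proof.
  intros H. simpl. rewrite gp_gfun, H. replace (Cmult z (RtoC 0)) with (RtoC 0) by ring.
  rewrite gfun_0. ring.
Qed.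

Lemma gm_zero a z n : a n = 0 -> cprod (gm a z) (S n) = cprod (gm a z) n.
Proof.
  intros H. simpl. rewrite gm_gfun, H. replace (Copp (Cmult z (RtoC 0))) with (RtoC 0) by ring.
  rewrite gfun_0. ring.
Qed.

Lemma cprod_lower (g : nat -> C) (u : nat -> R) :
  (forall i, 0 <= u i <= 1) -> (forall i, 1 - u i <= Cmod (g i)) ->
  forall n, 1 - rsum u n <= Cmod (cprod g n).
Proof.
  intros Hu Hg n. induction n; simpl.
  - rewrite Cmod_1. lra.
  - rewrite Cmod_mult. pose proof (Hu n). pose proof (Hg n).
    pose proof (Cmod_ge_0 (cprod g n)). pose proof (Cmod_ge_0 (g n)).
    pose proof (rsum_nonneg u n (fun i => proj1 (Hu i))).
    destruct (Rle_or_lt 0 (1 - rsum u n)).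
    + assert ((1 - rsum u n) * (1 - u n) <= Cmod (cprod g n) * Cmod (g n))
        by (apply Rmult_le_compat; lra).
      nra.
    + nra.
Qed.

Lemma lim_nonzero (Q : nat -> C) P d : 0 < d -> (forall n, d <= Cmod (Q n)) ->
  filterlim Q eventually (locally P) -> 0 < Cmod P.
Proof.
  intros Hd HQ HP. destruct (proj1 (flimC _ _ _) HP d Hd) as [N HN].
  specialize (HN N (le_n N)). specialize (HQ N).
  replace (Q N) with (Cplus (Cminus (Q N) P) P) in HQ by ring.
  pose proof (Cmod_triangle (Cminus (Q N) P) P). lra.
Qed.

Lemma gp_real_lower (a : nat -> R) x i : 0 <= x -> 0 <= a i -> x * a i <= 1 ->
  1 - x^2 * a i ^ 2 <= Cmod (gp a (RtoC x) i).
Proof.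
  intros Hx Ha H. unfold gp. rewrite Cmod_mult, Cmod_Cexp.
  rewrite <- RtoC_mult.
  replace (Cminus 1 (RtoC (x * a i))) with (RtoC (1 - x * a i)) by (rewrite RtoC_minus; reflexivity).
  rewrite Cmod_R, Rabs_right by lra. unfold Re, RtoC; cbn [fst].
  pose proof (exp_ineq1_le (x * a i)). nra.
Qed.

Lemma gm_real_lower (a : nat -> R) x i : 0 <= x -> 0 <= a i -> x * a i <= 1 ->
  1 - x^2 * a i ^ 2 <= Cmod (gm a (RtoC x) i).
Proof.
  intros Hx Ha H. unfold gm. rewrite Cmod_mult, Cmod_Cexp.
  rewrite <- RtoC_mult.
  replace (Cplus 1 (RtoC (x * a i))) with (RtoC (1 + x * a i)) by (rewrite RtoC_plus; reflexivity).
  rewrite Cmod_R, Rabs_right by nra. unfold Re, RtoC, Copp; cbn [fst].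
  pose proof (exp_ineq1_le (- (x * a i))).
  replace (1 - x^2 * a i^2) with ((1 + - (x*a i)) * (1 + x * a i)) by ring.
  apply Rmult_le_compat_r; auto. assert (0 <= x * a i) by (apply Rmult_le_pos; auto). lra.
Qed.

Lemma flim_Cmult {T} (F : (T -> Prop) -> Prop) {FF : Filter F} (f g : T -> C) (a b : C) :
  filterlim f F (locally a) -> filterlim g F (locally b) ->
  filterlim (fun x => Cmult (f x) (g x)) F (locally (Cmult a b)).
Proof.
  intros Hf Hg. apply (proj2 (flimC _ _ _)). intros eps Heps.
  pose proof (Cmod_ge_0 a). pose proof (Cmod_ge_0 b).
  set (e1 := eps / (2 * (Cmod b + 1))).
  set (e2 := Rmin 1 (eps / (2 * (Cmod a + 1)))).
  assert (He1 : 0 < e1) by (unfold e1; apply Rdiv_lt_0_compat; lra).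
  assert (He2 : 0 < e2) by (unfold e2; apply Rmin_pos; [lra|apply Rdiv_lt_0_compat; lra]).
  pose proof (proj1 (flimC _ _ _) Hf e1 He1) as F1.
  pose proof (proj1 (flimC _ _ _) Hg e2 He2) as F2.
  eapply filter_imp; [|exact (filter_and _ _ F1 F2)]. intros x [H1 H2].
  replace (Cminus (Cmult (f x) (g x)) (Cmult a b)) with
    (Cplus (Cmult (Cminus (f x) a) (g x)) (Cmult a (Cminus (g x) b))) by ring.
  eapply Rle_lt_trans; [apply Cmod_triangle|]. rewrite !Cmod_mult.
  assert (Hg1 : Cmod (g x) <= Cmod b + 1).
  { replace (g x) with (Cplus (Cminus (g x) b) b) by ring.
    eapply Rle_trans; [apply Cmod_triangle|]. assert (e2 <= 1) by apply Rmin_l. lra. }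
  assert (A1 : Cmod (Cminus (f x) a) * Cmod (g x) <= e1 * (Cmod b + 1)).
  { apply Rmult_le_compat; try apply Cmod_ge_0; lra. }
  assert (A2 : Cmod a * Cmod (Cminus (g x) b) <= Cmod a * e2).
  { apply Rmult_le_compat_l; lra. }
  assert (E1 : e1 * (Cmod b + 1) = eps / 2) by (unfold e1; field; lra).
  assert (E2 : Cmod a * e2 < eps / 2).
  { assert (e2 <= eps / (2 * (Cmod a + 1))) by apply Rmin_r.
    assert (Cmod a * e2 <= Cmod a * (eps / (2 * (Cmod a + 1)))) by (apply Rmult_le_compat_l; lra).
    assert (Cmod a * (eps / (2 * (Cmod a + 1))) < eps / 2).
    { replace (Cmod a * (eps / (2 * (Cmod a + 1)))) with (eps / 2 - eps / (2 * (Cmod a + 1))) by (field; lra).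
      assert (0 < eps / (2 * (Cmod a + 1))) by (apply Rdiv_lt_0_compat; lra). lra. }
    lra. }
  assert (Cmod (Cminus (f x) a) * Cmod (g x) < e1 * (Cmod b + 1) \/
          Cmod (Cminus (f x) a) * Cmod (g x) <= e1 * (Cmod b + 1)) by (right; auto).
  lra.
Qed.

Lemma flim_Cmod {T} (F : (T -> Prop) -> Prop) {FF : Filter F} (f : T -> C) (a : C) :
  filterlim f F (locally a) -> filterlim (fun x => Cmod (f x)) F (locally (Cmod a)).
Proof.
  intros Hf. eapply filterlim_comp; [exact Hf|].
  apply (@filterlim_norm C_AbsRing C_NormedModule a).
Qed.

Lemma flim_ln {T} (F : (T -> Prop) -> Prop) {FF : Filter F} (f : T -> R) (a : R) :
  0 < a -> filterlim f F (locally a) -> filterlim (fun x => ln (f x)) F (locally (ln a)).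
Proof.
  intros Ha Hf. eapply filterlim_comp; [exact Hf|].
  apply continuity_pt_filterlim. apply derivable_continuous_pt.
  exists (/ a). apply derivable_pt_lim_ln; auto.
Qed.

Lemma Cexp_m1 (w : C) : Cmod w <= 1/2 -> Cmod (Cminus (Cexp w) (RtoC 1)) <= 3 * Cmod w.
Proof.
  intros H. pose proof (Cexp_B1 w H). pose proof (Cmod_ge_0 w).
  replace (Cminus (Cexp w) (RtoC 1)) with (Cplus (Cminus (Cminus (Cexp w) (RtoC 1)) w) w) by ring.
  eapply Rle_trans; [apply Cmod_triangle|]. nra.
Qed.

Lemma flim_Cexp_lin {T} (F : (T -> Prop) -> Prop) {FF : Filter F} (z : C) (S : T -> R) (g : R) :
  filterlim S F (locally g) ->
  filterlim (fun x => Cexp (Copp (Cmult z (RtoC (S x))))) F (locally (Cexp (Copp (Cmult z (RtoC g))))).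
Proof.
  intros HS. apply (proj2 (flimC _ _ _)). intros eps Heps.
  set (K := Cmod (Cexp (Copp (Cmult z (RtoC g))))).
  pose proof (Cmod_ge_0 z). assert (HK : 0 <= K) by apply Cmod_ge_0.
  set (P := (K + 1) * (Cmod z + 1)).
  assert (HP : 1 <= P) by (unfold P; nra).
  set (m := Rmin (1/2) eps).
  assert (Hm : 0 < m) by (apply Rmin_pos; lra).
  assert (Hm1 : m <= 1/2) by apply Rmin_l. assert (Hm2 : m <= eps) by apply Rmin_r.
  set (d := m / (3 * P)).
  assert (Hd : 0 < d) by (unfold d; apply Rdiv_lt_0_compat; lra).
  eapply filter_imp; [|exact (proj1 (flimR _ _ _) HS d Hd)]. intros x Hx.
  set (w := Copp (Cmult z (RtoC (S x - g)))).
  assert (Hw : Cmod w = Cmod z * Rabs (S x - g)) by (unfold w; rewrite Cmod_opp, Cmod_mult, Cmod_R; auto).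
  pose proof (Rabs_pos (S x - g)).
  assert (HPd : P * d = m / 3) by (unfold d; field; lra).
  assert (Hw2 : Cmod w <= P * Rabs (S x - g)).
  { rewrite Hw. unfold P. assert (Cmod z <= (K+1) * (Cmod z + 1)) by nra. nra. }
  assert (Hw3 : P * Rabs (S x - g) < P * d) by (apply Rmult_lt_compat_l; lra).
  assert (Hw1 : Cmod w <= 1/2) by lra.
  replace (Cminus (Cexp (Copp (Cmult z (RtoC (S x))))) (Cexp (Copp (Cmult z (RtoC g)))))
    with (Cmult (Cexp (Copp (Cmult z (RtoC g)))) (Cminus (Cexp w) (RtoC 1))).
  2:{ unfold w. rewrite RtoC_minus.
      replace (Copp (Cmult z (RtoC (S x)))) with
        (Cplus (Copp (Cmult z (RtoC g))) (Copp (Cmult z (Cminus (RtoC (S x)) (RtoC g))))) by ring.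
      rewrite Cexp_add. ring. }
  rewrite Cmod_mult. fold K.
  pose proof (Cexp_m1 w Hw1).
  assert (K * Cmod (Cminus (Cexp w) (RtoC 1)) <= K * (3 * Cmod w)) by (apply Rmult_le_compat_l; auto).
  assert (HKz : K * Cmod z <= P) by (unfold P; assert (0 <= K * Cmod z) by (apply Rmult_le_pos; auto); lra).
  assert (E3 : K * (3 * Cmod w) = 3 * (K * Cmod z) * Rabs (S x - g)) by (rewrite Hw; ring).
  assert (3 * (K * Cmod z) * Rabs (S x - g) <= 3 * P * Rabs (S x - g)).
  { apply Rmult_le_compat_r; lra. }
  assert (3 * P * Rabs (S x - g) < 3 * P * d) by (apply Rmult_lt_compat_l; lra).
  assert (3 * P * d = m) by (unfold d; field; lra).
  lra.
Qed.

Lemma a_to0 (a : nat -> R) : (forall i, 0 <= a i) -> ex_series (fun i => a i ^ 2) ->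
  forall t, 0 < t -> exists m, a m <= t.
Proof.
  intros Ha Hs t Ht. pose proof (ex_series_lim_0 _ Hs) as H.
  apply is_lim_seq_spec in H.
  assert (Ht2 : 0 < t * t) by nra.
  destruct (H (mkposreal _ Ht2)) as [N HN]. exists N.
  specialize (HN N (le_n N)). simpl in HN. rewrite Rminus_0_r in HN.
  rewrite Rabs_right in HN by (pose proof (pow2_ge_0 (a N)); lra).
  destruct (Rle_or_lt (a N) t); auto. pose proof (Ha N). nra.
Qed.

Lemma Cexp3 (u v w : C) : Cplus (Cplus u v) w = RtoC 0 ->
  Cmult (Cmult (Cexp u) (Cexp v)) (Cexp w) = RtoC 1.
Proof. intros H. rewrite <- !Cexp_add, H. apply Cexp_0. Qed.

Theorem proposition5p7 (ap am : nat -> R) (g1 g2 : R) :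
  in_Omega ap am g1 g2 ->
  ((forall z : C,
      filterlim (fun Rr : R => PVprod ap am (/ (Rr ^ 2)) z)
        (Rbar_locally p_infty) (locally (Eomega ap am g1 g2 z)))
   <->
   (is_lim (fun Rr : R => trunc_sum ap (/ (Rr ^ 2)) - trunc_sum am (/ (Rr ^ 2)))
      p_infty g1
    /\ g2 = 0)).
Proof.
  intros [Hap0 [Hapd [Ham0 [Hamd [Hsq Hg2]]]]].
  destruct (sq_series ap am Hsq) as [SA SB].
  pose proof (a_to0 ap Hap0 SA) as Hzap.
  pose proof (a_to0 am Ham0 SB) as Hzam.
  set (Sf := fun Rr : R => trunc_sum ap (/ (Rr ^ 2)) - trunc_sum am (/ (Rr ^ 2))).
  set (Pp := fun z => limC (cprod (gp ap z))).
  set (Pm := fun z => limC (cprod (gm am z))).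
  assert (Hcvp : forall z, filterlim (cprod (gp ap z)) eventually (locally (Pp z))).
  { intros z. destruct (gen_cv ap z (gp ap z) Hap0 Hapd SA (fun i => gp_bound ap z i Hap0 Hapd)) as [P HP].
    unfold Pp. rewrite (limC_eq _ _ HP). exact HP. }
  assert (Hcvm : forall z, filterlim (cprod (gm am z)) eventually (locally (Pm z))).
  { intros z. destruct (gen_cv am z (gm am z) Ham0 Hamd SB (fun i => gm_bound am z i Ham0 Hamd)) as [P HP].
    unfold Pm. rewrite (limC_eq _ _ HP). exact HP. }
  set (Qp := fun z x => cprod (gp ap z) (cnt ap (/ (x ^ 2)))).
  set (Qm := fun z x => cprod (gm am z) (cnt am (/ (x ^ 2)))).
  assert (Hqp : forall z, filterlim (Qp z) (Rbar_locally p_infty) (locally (Pp z))).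
  { intros z. apply (cofinal_lim ap (cprod (gp ap z)) (Pp z) Hap0 Hapd Hzap (gp_zero ap z) (Hcvp z)). }
  assert (Hqm : forall z, filterlim (Qm z) (Rbar_locally p_infty) (locally (Pm z))).
  { intros z. apply (cofinal_lim am (cprod (gm am z)) (Pm z) Ham0 Hamd Hzam (gm_zero am z) (Hcvm z)). }
  assert (HE : forall z, Eomega ap am g1 g2 z =
     Cmult (Cmult (Cexp (Cminus (Copp (Cmult (RtoC g1) z)) (Cmult (RtoC (g2 / 2)) (Cmult z z)))) (Pp z)) (Pm z)).
  { intros z. reflexivity. }
  assert (Hid : forall z x, 1 < x -> PVprod ap am (/ (x ^ 2)) z =
     Cmult (Cmult (Qp z x) (Qm z x)) (Cexp (Copp (Cmult z (RtoC (Sf x)))))).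
  { intros z x Hx. assert (Ht : 0 < / (x ^ 2)) by (apply Rinv_0_lt_compat; nra).
    pose proof (cnt_spec ap _ Hapd (Hzap _ Ht)) as HN.
    pose proof (cnt_spec am _ Hamd (Hzam _ Ht)) as HM.
    unfold PVprod, Sf, Qp, Qm.
    rewrite (trunc_prod_eq ap _ _ _ HN), (trunc_prod_eq am _ _ _ HM).
    rewrite (trunc_sum_eq ap _ _ HN), (trunc_sum_eq am _ _ HM).
    rewrite gp_id, gm_id. unfold fp, fm. rewrite RtoC_minus.
    set (A := cprod (fun i : nat => Cminus 1 (Cmult (RtoC (ap i)) z)) (cnt ap (/ x ^ 2))).
    set (B := cprod (fun i : nat => Cplus 1 (Cmult (RtoC (am i)) z)) (cnt am (/ x ^ 2))).
    set (u := Cmult z (RtoC (rsum ap (cnt ap (/ x ^ 2))))).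
    set (v := Copp (Cmult z (RtoC (rsum am (cnt am (/ x ^ 2)))))).
    set (w := Copp (Cmult z (Cminus (RtoC (rsum ap (cnt ap (/ x ^ 2)))) (RtoC (rsum am (cnt am (/ x ^ 2))))))).
    assert (H3 : Cmult (Cmult (Cexp u) (Cexp v)) (Cexp w) = RtoC 1).
    { apply Cexp3. unfold u, v, w. ring. }
    transitivity (Cmult (Cmult A B) (Cmult (Cmult (Cexp u) (Cexp v)) (Cexp w))).
    - rewrite H3. ring.
    - ring. }
  split.
  -
    intros HPV.
    set (D := 1 + ap 0%nat + am 0%nat + Series (fun i => ap i ^ 2) + Series (fun i => am i ^ 2)).
    pose proof (rsum_le_Series _ 0 (fun i => pow2_ge_0 (ap i)) SA) as HSA0. cbn [rsum] in HSA0.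
    pose proof (rsum_le_Series _ 0 (fun i => pow2_ge_0 (am i)) SB) as HSB0. cbn [rsum] in HSB0.
    pose proof (Hap0 0%nat). pose proof (Ham0 0%nat).
    assert (HD : 1 <= D) by (unfold D; lra).
    assert (Key : forall x, 0 < x -> x * D <= 1 -> is_lim Sf p_infty (g1 + g2 * x / 2)).
    { intros x Hx HxD.
      assert (Hx1 : x <= 1) by nra.
      assert (Hxa : forall i, x * ap i <= 1).
      { intros i. pose proof (dec_mono ap Hapd 0 i ltac:(lia)).
        assert (x * ap i <= x * D) by (apply Rmult_le_compat_l; unfold D; lra). lra. }
      assert (Hxb : forall i, x * am i <= 1).
      { intros i. pose proof (dec_mono am Hamd 0 i ltac:(lia)).
        assert (x * am i <= x * D) by (apply Rmult_le_compat_l; unfold D; lra). lra. }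
      assert (HPp : 0 < Cmod (Pp (RtoC x))).
      { set (u := fun i => x^2 * ap i ^2).
        assert (Hu : forall i, 0 <= u i <= 1).
        { intros i. unfold u. pose proof (Hap0 i). pose proof (Hxa i).
          assert (0 <= x * ap i) by (apply Rmult_le_pos; lra).
          replace (x^2 * ap i^2) with ((x * ap i) * (x * ap i)) by ring. split; nra. }
        assert (Hsu : ex_series u).
        { unfold u. apply (ex_series_ext (fun i => scal (x^2) (ap i ^ 2))).
          intros; reflexivity. apply (@ex_series_scal_l R_AbsRing R_NormedModule). auto. }
        assert (HSu : Series u = x^2 * Series (fun i => ap i ^ 2)) by (unfold u; apply Series_scal_l).
        assert (HSu1 : Series u < 1).
        { rewrite HSu. assert (x * Series (fun i => ap i ^ 2) <= x * D) by (apply Rmult_le_compat_l; unfold D; lra).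
          assert (x * (x * Series (fun i => ap i ^ 2)) <= 1 * (x * Series (fun i => ap i ^ 2))).
          { apply Rmult_le_compat_r; auto. apply Rmult_le_pos; lra. }
          assert (x * Series (fun i => ap i ^ 2) <= 1 - x) by (unfold D in HxD; nra).
          replace (x^2 * Series (fun i => ap i ^ 2)) with (x * (x * Series (fun i => ap i ^ 2))) by ring. lra. }
        apply (lim_nonzero (cprod (gp ap (RtoC x))) (Pp (RtoC x)) (1 - Series u)); [lra | | apply Hcvp].
        intros n. eapply Rle_trans;
          [|apply (cprod_lower _ u Hu (fun i => gp_real_lower ap x i (Rlt_le _ _ Hx) (Hap0 i) (Hxa i)) n)].
        pose proof (rsum_le_Series u n (fun i => proj1 (Hu i)) Hsu). lra. }
      assert (HPm : 0 < Cmod (Pm (RtoC x))).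
      { set (u := fun i => x^2 * am i ^2).
        assert (Hu : forall i, 0 <= u i <= 1).
        { intros i. unfold u. pose proof (Ham0 i). pose proof (Hxb i).
          assert (0 <= x * am i) by (apply Rmult_le_pos; lra).
          replace (x^2 * am i^2) with ((x * am i) * (x * am i)) by ring. split; nra. }
        assert (Hsu : ex_series u).
        { unfold u. apply (ex_series_ext (fun i => scal (x^2) (am i ^ 2))).
          intros; reflexivity. apply (@ex_series_scal_l R_AbsRing R_NormedModule). auto. }
        assert (HSu : Series u = x^2 * Series (fun i => am i ^ 2)) by (unfold u; apply Series_scal_l).
        assert (HSu1 : Series u < 1).
        { rewrite HSu. assert (x * Series (fun i => am i ^ 2) <= x * D) by (apply Rmult_le_compat_l; unfold D; lra).
          assert (x * (x * Series (fun i => am i ^ 2)) <= 1 * (x * Series (fun i => am i ^ 2))).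
          { apply Rmult_le_compat_r; auto. apply Rmult_le_pos; lra. }
          assert (x * Series (fun i => am i ^ 2) <= 1 - x) by (unfold D in HxD; nra).
          replace (x^2 * Series (fun i => am i ^ 2)) with (x * (x * Series (fun i => am i ^ 2))) by ring. lra. }
        apply (lim_nonzero (cprod (gm am (RtoC x))) (Pm (RtoC x)) (1 - Series u)); [lra | | apply Hcvm].
        intros n. eapply Rle_trans;
          [|apply (cprod_lower _ u Hu (fun i => gm_real_lower am x i (Rlt_le _ _ Hx) (Ham0 i) (Hxb i)) n)].
        pose proof (rsum_le_Series u n (fun i => proj1 (Hu i)) Hsu). lra. }
      set (z := RtoC x).
      set (mm := Cmod (Pp z) * Cmod (Pm z)).
      assert (Hmm : 0 < mm) by (apply Rmult_lt_0_compat; auto).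
      set (q := fun y => Cmult (Qp z y) (Qm z y)).
      assert (Hq : filterlim (fun y => Cmod (q y)) (Rbar_locally p_infty) (locally mm)).
      { unfold mm. rewrite <- Cmod_mult. apply (@flim_Cmod R (Rbar_locally p_infty) _).
        apply (@flim_Cmult R (Rbar_locally p_infty) _); auto. }
      assert (HPVm : filterlim (fun y => Cmod (PVprod ap am (/ (y^2)) z)) (Rbar_locally p_infty)
          (locally (Cmod (Eomega ap am g1 g2 z)))).
      { apply (@flim_Cmod R (Rbar_locally p_infty) _). apply HPV. }
      set (r0 := - (g1 * x) - g2 / 2 * (x * x)).
      assert (HCE : Cmod (Eomega ap am g1 g2 z) = exp r0 * mm).
      { rewrite HE, !Cmod_mult, Cmod_Cexp. unfold mm.
        replace (Re (Cminus (Copp (Cmult (RtoC g1) z)) (Cmult (RtoC (g2 / 2)) (Cmult z z)))) with r0.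
        ring. unfold z, r0, Re, Cminus, Copp, Cmult, Cplus, RtoC; cbn [fst snd]. ring. }
      assert (Hlnq : is_lim (fun y => ln (Cmod (q y))) p_infty (ln mm)).
      { exact (@flim_ln R (Rbar_locally p_infty) _ _ _ Hmm Hq). }
      assert (HlnP : is_lim (fun y => ln (Cmod (PVprod ap am (/ (y^2)) z))) p_infty (ln (exp r0 * mm))).
      { rewrite <- HCE. apply (@flim_ln R (Rbar_locally p_infty) _).
        rewrite HCE. apply Rmult_lt_0_compat; auto. apply exp_pos. exact HPVm. }
      pose proof (is_lim_minus' _ _ _ _ _ Hlnq HlnP) as Hdiff.
      assert (Hlim : ln mm - ln (exp r0 * mm) = - r0).
      { rewrite ln_mult, ln_exp; [ring | apply exp_pos | auto]. }
      rewrite Hlim in Hdiff.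
      assert (HxS : is_lim (fun y => x * Sf y) p_infty (- r0)).
      { eapply is_lim_ext_loc; [|exact Hdiff].
        destruct (proj1 (flimR _ _ _) Hq mm Hmm) as [M1 HM1].
        exists (Rmax 1 M1). intros y Hy.
        assert (Hy1 : 1 < y) by (eapply Rle_lt_trans; [apply Rmax_l|exact Hy]).
        assert (Hy2 : M1 < y) by (eapply Rle_lt_trans; [apply Rmax_r|exact Hy]).
        specialize (HM1 y Hy2). cbv beta in HM1.
        assert (Hqp0 : 0 < Cmod (q y)) by (apply Rabs_lt_between in HM1; lra).
        rewrite (Hid z y Hy1).
        change (Cmult (Qp z y) (Qm z y)) with (q y).
        rewrite Cmod_mult, Cmod_Cexp.
        replace (Re (Copp (Cmult z (RtoC (Sf y))))) with (- (x * Sf y))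
          by (unfold z, Re, Copp, Cmult, RtoC; cbn [fst snd]; ring).
        rewrite ln_mult, ln_exp; [ring | auto | apply exp_pos]. }
      pose proof (is_lim_scal_l _ (/ x) _ _ HxS) as H5.
      replace (g1 + g2 * x / 2) with (/ x * (- r0)) by (unfold r0; field; lra).
      apply (is_lim_ext (fun y => / x * (x * Sf y))).
      { intros y. field. lra. }
      exact H5. }
    set (x0 := / (2 * D)).
    assert (Hx0 : 0 < x0) by (unfold x0; apply Rinv_0_lt_compat; lra).
    assert (Hx0D : x0 * D = 1/2) by (unfold x0; field; lra).
    pose proof (Key x0 Hx0 ltac:(lra)) as K1.
    pose proof (Key (2 * x0) ltac:(lra) ltac:(lra)) as K2.
    pose proof (is_lim_unique _ _ _ K1) as U1.
    pose proof (is_lim_unique _ _ _ K2) as U2.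
    rewrite U1 in U2. injection U2 as U.
    assert (Hg0 : g2 = 0) by nra.
    split; auto.
    rewrite Hg0 in K1. assert (E0 : g1 + 0 * x0 / 2 = g1) by lra. rewrite E0 in K1. exact K1.
  -
    intros [HS Hg20]. subst g2. intros z.
    assert (HE2 : Eomega ap am g1 0 z = Cmult (Cmult (Pp z) (Pm z)) (Cexp (Copp (Cmult z (RtoC g1))))).
    { rewrite HE. replace (0 / 2) with 0 by field.
      replace (Cminus (Copp (Cmult (RtoC g1) z)) (Cmult (RtoC 0) (Cmult z z))) with
        (Copp (Cmult z (RtoC g1))) by ring. ring. }
    rewrite HE2.
    apply (filterlim_ext_loc (fun x => Cmult (Cmult (Qp z x) (Qm z x)) (Cexp (Copp (Cmult z (RtoC (Sf x))))))).
    + exists 1. intros x Hx. symmetry. apply Hid; auto.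
    + apply (@flim_Cmult R (Rbar_locally p_infty) _). apply (@flim_Cmult R (Rbar_locally p_infty) _); auto.
      apply (@flim_Cexp_lin R (Rbar_locally p_infty) _). exact HS.
Qed.
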